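(* Let $X$ be a Banach space, $D\subset X$ a closed, bounded and convex set, and $\tau$ a locally convex topology on $D$ containing the relative weak topology of $D$. Suppose $D$ is $\tau$-strongly regular. Let $C$ be a nonempty convex subset of $D$. Then for every $\varepsilon>0$ and every nonempty set $O\in\tau|_C$ there exist $n\in\mathbb{N}$ and nonempty sets $O_1,\dots,O_n\in\tau|_C$ with $O_i\subset O$ for all $i$, such that $$\operatorname{diam}\Big(\sum_{i=1}^n\tfrac{1}{n}O_i\Big)<\varepsilon.$$
   Context: For $C\subset D$, $\tau|_C$ denotes the topology induced by $\tau$ on $C$. A topology is locally convex if it has a basis of convex open sets. $D$ is called $\tau$-strongly regular if for every bounded convex subset $C$ of $D$ and every $\varepsilon>0$ there is a convex combination $\sum_i\lambda_iU_i$ of nonempty $\tau|_C$-open sets $U_i$ with diameter less than $\varepsilon$. Sums of sets are Minkowski sums: $\sum_i\lambda_iU_i=\{\sum_i\lambda_iu_i: u_i\in U_i\}$. *)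

(* Defs.v *)
From mathcomp Require Import all_boot all_order all_algebra.
From mathcomp Require Import all_classical all_reals all_analysis.
Set Implicit Arguments. Unset Strict Implicit. Unset Printing Implicit Defensive.
Import Order.TTheory GRing.Theory Num.Theory.
Import numFieldNormedType.Exports.
Local Open Scope classical_set_scope.
Local Open Scope ring_scope.

Section Defs.
Variables (R : realType) (V : normedModType R).

Definition convex (A : set V) : Prop :=
  forall x y (t : R), A x -> A y -> 0 <= t -> t <= 1 -> A (t *: x + (1 - t) *: y).

Definition cont_lin_functional (f : V -> R) : Prop :=
  (forall (a : R) (x y : V), f (a *: x + y) = a * f x + f y) /\ continuous f.

Definition weakly_open (U : set V) : Prop :=
  forall x, U x -> exists (k : nat) (f : 'I_k -> V -> R) (e : R),
    (forall i, cont_lin_functional (f i)) /\ 0 < e /\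
    [set y | forall i, `|f i y - f i x| < e] `<=` U.

Definition topology_on (D : set V) (tau : set (set V)) : Prop :=
  (forall U, tau U -> U `<=` D) /\ tau D /\
  (forall U W, tau U -> tau W -> tau (U `&` W)) /\
  (forall (I : Type) (F : I -> set V), (forall i, tau (F i)) -> tau (\bigcup_i F i)).

Definition locally_convex_on (tau : set (set V)) : Prop :=
  forall U x, tau U -> U x -> exists W, [/\ tau W, convex W, W x & W `<=` U].

Definition contains_rel_weak (D : set V) (tau : set (set V)) : Prop :=
  forall U, weakly_open U -> tau (U `&` D).

Definition induced_top (tau : set (set V)) (C : set V) : set (set V) :=
  [set O | exists U, tau U /\ O = U `&` C].

(* diameter, valued in extended reals (set_diam set0 = -oo) *)
Definition set_diam (A : set V) : \bar R :=
  ereal_sup [set (`|x - y|)%:E | x in A & y in A].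

Definition mink_comb (n : nat) (lam : 'I_n -> R) (U : 'I_n -> set V) : set V :=
  [set x | exists u : 'I_n -> V, (forall i, U i (u i)) /\ x = \sum_(i < n) lam i *: u i].

Definition strongly_regular (D : set V) (tau : set (set V)) : Prop :=
  forall C : set V, C `<=` D -> C !=set0 -> bounded_set C -> convex C ->
  forall eps : R, 0 < eps ->
  exists (n : nat) (lam : 'I_n -> R) (U : 'I_n -> set V),
    [/\ (forall i, 0 <= lam i), \sum_(i < n) lam i = 1,
        (forall i, induced_top tau C (U i) /\ U i !=set0) &
        (set_diam (mink_comb lam U) < eps%:E)%E].
End Defs.

(* Main.v *)
Require Import Defs.
From mathcomp Require Import all_boot all_order all_algebra.
From mathcomp Require Import all_classical all_reals all_analysis.
From mathcomp Require Import lra.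
Import Order.TTheory GRing.Theory Num.Theory.
Import numFieldNormedType.Exports.
Local Open Scope classical_set_scope.
Local Open Scope ring_scope.

Lemma convexI (R : realType) (V : normedModType R) (A B : set V) :
  convex A -> convex B -> convex (A `&` B).
Proof.
move=> cA cB x y t [Ax Bx] [Ay By] t0 t1; split; [exact: cA | exact: cB].
Qed.

Lemma conv_avg (R : realType) (V : normedModType R) (A : set V) (a0 : V)
  (I : Type) (s : seq I) (P : pred I) (F : I -> V) :
  convex A -> A a0 -> (forall k, P k -> A (F k)) ->
  exists a, A a /\ \sum_(k <- s | P k) F k = (count P s)%:R *: a.
Proof.
move=> cA Aa0 HF; elim: s => [|k s [a [Aa IH]]].
  by exists a0; rewrite big_nil scale0r.
rewrite big_cons /=; case: (boolP (P k)) => Pk; last by exists a; rewrite add0n.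
set m := count P s.
exists ((m.+1%:R)^-1 *: F k + (1 - (m.+1%:R)^-1) *: a); split.
  apply: cA => //; try exact: HF.
  by rewrite invf_le1 ?ltr0n // ler1n.
rewrite IH /= add1n scalerDr scalerA mulfV ?pnatr_eq0 // scale1r scalerA.
congr (_ + _ *: _).
rewrite mulrBr mulr1 mulfV ?pnatr_eq0 // -natr1.
by rewrite addrK.
Qed.
Definition flat_seq n (c : 'I_n -> nat) : seq 'I_n :=
  flatten [seq nseq (c j) j | j <- enum 'I_n].
Arguments flat_seq {n}.

Lemma count_flat n (c : 'I_n -> nat) i : count (pred1 i) (flat_seq c) = c i.
Proof.
rewrite /flat_seq count_flatten sumnE big_map big_map enumT.
rewrite (bigD1 i) //= count_nseq /= eqxx mul1n big1 ?addn0 // => j /negbTE ji.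
by rewrite count_nseq /= ji.
Qed.

Lemma size_flat n (c : 'I_n -> nat) : size (flat_seq c) = (\sum_(i < n) c i)%N.
Proof.
rewrite /flat_seq size_flatten sumnE /shape -map_comp big_map enumT.
by apply: eq_bigr => i _; rewrite /= size_nseq.
Qed.

Lemma count_tnth (T : eqType) (s : seq T) (i : T) :
  count (fun k : 'I_(size s) => tnth (in_tuple s) k == i) (index_enum 'I_(size s))
  = count (pred1 i) s.
Proof.
by rewrite -!sum1_count [RHS]big_tnth.
Qed.

Lemma group_sum (R : realType) (V : normedModType R) n N (g : 'I_N -> 'I_n)
  (A : 'I_n -> set V) (u : 'I_N -> V) (w : R) :
  (forall i, convex (A i)) -> (forall i, A i !=set0) -> (forall k, A (g k) (u k)) ->
  exists a : 'I_n -> V, (forall i, A i (a i)) /\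
   \sum_(k < N) w *: u k =
   \sum_(i < n) (w * (count (fun k => g k == i) (index_enum 'I_N))%:R) *: a i.
Proof.
move=> cA neA hu.
have H : forall i, exists a, A i a /\
    \sum_(k < N | g k == i) u k = (count (fun k => g k == i) (index_enum 'I_N))%:R *: a.
  move=> i; have [a0 Aa0] := neA i.
  apply: (@conv_avg _ _ _ _ _ _ _ _ (cA i) Aa0) => k /eqP <-; exact: hu.
have [a Ha] := choice H.
exists a; split; first by move=> i; case: (Ha i).
rewrite (partition_big g xpredT) //=; apply: eq_bigr => i _.
by rewrite -scaler_sumr; case: (Ha i) => _ ->; rewrite scalerA.
Qed.

Lemma rearr (V : zmodType) (P Q p q : V) : P - Q = (p - q) + ((P - p) - (Q - q)).
Proof. by rewrite opprB addrACA [p + _]addrC subrK addKr. Qed.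

Theorem lemma2p2 (R : realType) (X : completeNormedModType R)
  (D : set X) (tau : set (set X)) :
  closed D -> bounded_set D -> convex D ->
  topology_on D tau -> locally_convex_on tau -> contains_rel_weak D tau ->
  strongly_regular D tau ->
  forall C : set X, C !=set0 -> convex C -> C `<=` D ->
  forall eps : R, 0 < eps ->
  forall O : set X, induced_top tau C O -> O !=set0 ->
  exists (n : nat) (Os : 'I_n -> set X),
    [/\ (0 < n)%N,
        (forall i, induced_top tau C (Os i) /\ Os i !=set0 /\ Os i `<=` O) &
        (set_diam (mink_comb (fun _ => (n%:R)^-1 : R)%R Os) < eps%:E)%E].
Proof.
move=> _ hDb _ [_ [_ [tauI _]]] hlc _ hSR C [c0 Cc0] cC CD eps eps0 O
  [U [tU ->]] [x0 [Ux0 Cx0]].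
have [W [tW cW Wx0 WU]] := hlc U x0 tU Ux0.
have [M M0 HM] : exists2 M : R, 0 < M & forall x, D x -> `|x| <= M.
  have [M M0 HM] := pinfty_ex_gt0 hDb.
  by exists M => // x Dx; exact: HM.
have C'D : W `&` C `<=` D by move=> z [_ /CD].
have bC' : [bounded x | x in W `&` C].
  exact: (filterS (fun r Hr z Cz => Hr z (C'D z Cz)) hDb).
have e2 : 0 < eps / 2 by rewrite divr_gt0.
have [n [lam [Ui [lam0 lam1 hUi hdiam]]]] :=
  hSR (W `&` C) C'D (ex_intro _ x0 (conj Wx0 Cx0)) bC' (@convexI _ _ _ _ cW cC) (eps/2) e2.
have hA : forall i, exists Ai : set X,
  [/\ induced_top tau C Ai, Ai !=set0, Ai `<=` U `&` C, Ai `<=` Ui i & convex Ai].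
  move=> i; have [[Vi [tVi ->]] [y [Viy [Wy Cy]]]] := hUi i.
  have [Wi [tWi cWi Wiy WiVi]] := hlc Vi y tVi Viy.
  exists (Wi `&` W `&` C); split.
  - by exists (Wi `&` W); split => //; exact: tauI.
  - by exists y.
  - by move=> z [[_ Wz] Cz]; split => //; exact: WU.
  - by move=> z [[Wiz Wz] Cz]; split => //; exact: WiVi.
  - by apply: convexI => //; apply: convexI.
have [A hA'] := choice hA.
pose K : nat := ((Num.truncn (8 * n%:R * M / eps)).+1 + n)%N.
pose c i := Num.truncn (K%:R * lam i).
pose s := flat_seq c.
pose N := size s.
pose g := tnth (in_tuple s).
have hc i : (c i)%:R <= K%:R * lam i /\ K%:R * lam i < (c i)%:R + 1.
  have := truncn_itv (mulr_ge0 (ler0n R K) (lam0 i)) => /andP[h1 h2].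
  by split => //; rewrite -natr1 -/(c i) in h2.
have hN : N%:R = \sum_(i < n) (c i)%:R :> R by rewrite /N size_flat natr_sum.
have hcnt i : count (fun k => g k == i) (index_enum 'I_N) = c i.
  by rewrite count_tnth count_flat.
have hsK : \sum_(i < n) K%:R * lam i = K%:R :> R by rewrite -mulr_sumr lam1 mulr1.
have hNK : N%:R <= K%:R :> R.
  by rewrite hN -hsK; apply: ler_sum => i _; case: (hc i).
have hKN : K%:R <= N%:R + n%:R :> R.
  have : \sum_(i < n) K%:R * lam i <= \sum_(i < n) ((c i)%:R + 1) :> R.
    by apply: ler_sum => i _; case: (hc i) => _ /ltW.
  by rewrite hsK big_split /= sumr_const card_ord -hN.
have hKn : (n < K)%N by rewrite /K addSnnS leq_addl.
have hKn' : n%:R + 1 <= K%:R :> R by rewrite natr1 ler_nat.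
have hNpos : 0 < N%:R :> R by lra.
have hKpos : 0 < K%:R :> R by lra.
have hN0 : (0 < N)%N by rewrite -(ltr0n R).
have hKe : 8 * n%:R * M / eps < K%:R.
  apply: lt_le_trans (truncnS_gt _) _.
  by rewrite /K natrD lerDl ler0n.
have hKe' : 8 * n%:R * M < K%:R * eps by rewrite -ltr_pdivrMr.
pose mu i : R := N%:R^-1 * (c i)%:R.
have hmu1 : \sum_(i < n) mu i = 1.
  by rewrite -mulr_sumr -hN mulVf // pnatr_eq0 -lt0n.
have hd i : lam i - mu i < K%:R^-1.
  have h1 : K%:R^-1 * (c i)%:R <= mu i.
    by rewrite /mu ler_wpM2r // lef_pV2 ?posrE.
  have h2 : lam i < K%:R^-1 * (c i)%:R + K%:R^-1.
    have : K%:R^-1 * (K%:R * lam i) < K%:R^-1 * ((c i)%:R + 1).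
      by rewrite ltr_pM2l ?invr_gt0 //; case: (hc i).
    by rewrite mulrA mulVf ?mul1r ?mulrDr ?mulr1 //; exact: lt0r_neq0.
  lra.
have hsumd : \sum_(i < n) (mu i - lam i) = 0 by rewrite sumrB hmu1 lam1 subrr.
have habs : \sum_(i < n) `|mu i - lam i| <= n%:R * (2 * K%:R^-1).
  apply: le_trans (_ : \sum_(i < n) ((mu i - lam i) + 2 * K%:R^-1) <= _).
    have hKi : 0 < K%:R^-1 :> R by rewrite invr_gt0.
    apply: ler_sum => i _; have := hd i => h; rewrite ler_norml; apply/andP; split; lra.
  by rewrite big_split /= hsumd add0r sumr_const card_ord (mulr_natl _ n).
have cA i : convex (A i) by case: (hA' i).
have neA i : A i !=set0 by case: (hA' i).
have AD i z : A i z -> D z by case: (hA' i) => _ _ h _ _ /h [_ /CD].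
have AU i z : A i z -> Ui i z by case: (hA' i) => _ _ _ h _ /h.
exists N, (fun k => A (g k)); split => //.
  move=> k; have [h1 h2 h3 _ _] := hA' (g k); split => //; split => //.
pose r := eps / 2 + n%:R * (2 * K%:R^-1) * (M + M).
have hr : r < eps.
  have : K%:R^-1 * (8 * n%:R * M) < K%:R^-1 * (K%:R * eps) by rewrite ltr_pM2l ?invr_gt0.
  rewrite [X in _ < X]mulrA mulVf ?mul1r; last exact: lt0r_neq0.
  rewrite /r; lra.
apply: (@le_lt_trans _ _ r%:E); last by rewrite lte_fin.
apply: ge_ereal_sup => _ [x [u [hu ->]] [y [v [hv ->]] <-]].
rewrite lee_fin.
have [a [ha ->]] := @group_sum R X n N g A u (N%:R^-1) cA neA hu.
have [b [hb ->]] := @group_sum R X n N g A v (N%:R^-1) cA neA hv.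
have ex : forall a : 'I_n -> X,
    \sum_(i < n) (N%:R^-1 * (count (fun k => g k == i) (index_enum 'I_N))%:R) *: a i
    = \sum_(i < n) mu i *: a i.
  by move=> a'; apply: eq_bigr => i _; rewrite hcnt.
rewrite !ex (rearr _ _ _ (\sum_(i < n) lam i *: a i) (\sum_(i < n) lam i *: b i)).
apply: le_trans (ler_normD _ _) _.
rewrite /r; apply: lerD.
  apply: ltW.
  have h1 : (`|\sum_(i < n) lam i *: a i - \sum_(i < n) lam i *: b i|%:E
       <= set_diam (mink_comb lam Ui))%E.
    apply: ereal_sup_ubound; exists (\sum_(i < n) lam i *: a i).
      by exists a; split => // i; apply: AU.
    exists (\sum_(i < n) lam i *: b i) => //.
    by exists b; split => // i; apply: AU.
  by have := le_lt_trans h1 hdiam; rewrite lte_fin.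
have -> : \sum_(i < n) mu i *: a i - \sum_(i < n) lam i *: a i -
    (\sum_(i < n) mu i *: b i - \sum_(i < n) lam i *: b i) =
    \sum_(i < n) (mu i - lam i) *: (a i - b i).
  rewrite -!sumrB; apply: eq_bigr => i _; by rewrite scalerBr !scalerBl.
apply: le_trans (ler_norm_sum _ _ _) _.
apply: le_trans (_ : \sum_(i < n) `|mu i - lam i| * (M + M) <= _).
  apply: ler_sum => i _; rewrite normrZ ler_wpM2l //.
  apply: le_trans (ler_normB _ _) _.
  by apply: lerD; apply: HM; apply: (AD i).
by rewrite -mulr_suml ler_wpM2r // addr_ge0 // ltW.
Qed.
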